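(* Let $(\boldsymbol X(t))_{t\in\mathbb Z}$ be a $d$-variate weakly stationary process with $\mathbb E\boldsymbol X(t)=0$, let $a,b\in\{1,\ldots,d\}$, and assume $\sum_{u=-\infty}^\infty|u||\gamma_{jj}(u)|<\infty$ for $j=a,b$. Let $n\in\mathbb N$ and $k\in\{0,\ldots,n-1\}$. Then $$d_{\mathrm W}\Big(\mathcal L\big(n^{1/2}(\tilde\gamma_{ab}(k)-\gamma_{ab}(k))\big),\mathcal L\big(n^{1/2}(\hat\gamma_{ab}(k)-\gamma_{ab}(k))\big)\Big)\le n^{-1/2}\Big(\sum_{u=-\infty}^\infty|\gamma_{aa}(u)|\Big)^{1/2}\Big(\sum_{u=-\infty}^\infty|\gamma_{bb}(u)|\Big)^{1/2}$$ $$+\frac{|k|}{n^{3/2}}\Big(\sum_{u=-\infty}^\infty|\gamma_{aa}(u)|+\frac1n\sum_{u=-\infty}^\infty|u||\gamma_{aa}(u)|\Big)^{1/2}\Big(\sum_{u=-\infty}^\infty|\gamma_{bb}(u)|+\frac1n\sum_{u=-\infty}^\infty|u||\gamma_{bb}(u)|\Big)^{1/2}.$$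
   Context: $\gamma_{ab}(k):=\mathbb E[X_a(t+k)X_b(t)]$. With $\bar X_j:=\frac1n\sum_{t=1}^nX_j(t)$, $\tilde\gamma_{ab}(k):=\frac1n\sum_{t=1}^{n-k}(X_a(t+k)-\bar X_a)(X_b(t)-\bar X_b)$ and $\hat\gamma_{ab}(k):=\frac1n\sum_{t=1}^{n-k}X_a(t+k)X_b(t)$. $d_{\mathrm W}(\mathcal L(U),\mathcal L(V)):=\sup_h|\mathbb Eh(U)-\mathbb Eh(V)|$ over all 1-Lipschitz $h:\mathbb R\to\mathbb R$. *)

(* Defs.v *)
From HB Require Import structures.
From mathcomp Require Import all_boot all_order all_algebra.
From mathcomp Require Import all_classical all_reals all_analysis.
Set Implicit Arguments. Unset Strict Implicit. Unset Printing Implicit Defensive.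
Import Order.TTheory GRing.Theory Num.Theory.
Local Open Scope classical_set_scope.
Local Open Scope ring_scope.

Section defs.
Context {dT : measure_display} {T : measurableType dT} {R : realType}
  (P : probability T R) {d : nat}.

(* A d-variate process indexed by Z: X t j is the j-th coordinate at time t. *)
Definition process := int -> 'I_d -> T -> R.

Definition weakly_stationary_centred (X : process) : Prop :=
  [/\ (forall t j, measurable_fun setT (X t j)),
      (forall t j, P.-integrable setT (fun w => (X t j w ^+ 2)%:E)),
      (forall t j, ('E_P[X t j] = 0)%E) &
      (forall (a b : 'I_d) (t u : int), ('E_P[fun w => (X (t + u) a w * X t b w)%R]
                       = 'E_P[fun w => (X u a w * X 0 b w)%R])%E)].

Definition acov (X : process) (a b : 'I_d) (k : int) : R :=
  fine ('E_P[fun w => (X k a w * X 0 b w)%R])%E.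

Definition smean (X : process) (n : nat) (j : 'I_d) : T -> R :=
  fun w => n%:R^-1 * \sum_(1 <= t < n.+1) X t%:Z j w.

Definition acov_tilde (X : process) (n : nat) (a b : 'I_d) (k : nat) : T -> R :=
  fun w => n%:R^-1 * \sum_(1 <= t < (n - k).+1)
     ((X (t + k)%:Z a w - smean X n a w) * (X t%:Z b w - smean X n b w)).

Definition acov_hat (X : process) (n : nat) (a b : 'I_d) (k : nat) : T -> R :=
  fun w => n%:R^-1 * \sum_(1 <= t < (n - k).+1) (X (t + k)%:Z a w * X t%:Z b w).

End defs.

Definition dW {dT : measure_display} {T : measurableType dT} {R : realType}
  (P : probability T R) (U V : T -> R) : \bar R :=
  ereal_sup [set (`| 'E_P[h \o U] - 'E_P[h \o V] |)%E
            | h in [set h : R -> R | forall x y, `|h x - h y| <= `|x - y|]].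

Definition Zsum {R : realType} (g : int -> R) : R :=
  g 0 + limn (fun N : nat => \sum_(1 <= u < N) (g u%:Z + g (- u%:Z))).

Definition Zabs_summable {R : realType} (g : int -> R) : Prop :=
  cvgn (fun N : nat => \sum_(1 <= u < N) (`|g u%:Z| + `|g (- u%:Z)|)).

(* Main.v *)
Require Import Defs.
From HB Require Import structures.
From mathcomp Require Import all_boot all_order all_algebra.
From mathcomp Require Import all_classical all_reals all_analysis.
From mathcomp Require Import ring lra zify.
Import Order.TTheory GRing.Theory Num.Theory measurable_realfun.
Import numFieldNormedType.Exports.
Set Implicit Arguments. Unset Strict Implicit. Unset Printing Implicit Defensive.
Local Open Scope classical_set_scope.
Local Open Scope ring_scope.

Section Infra.
Variables (dT : measure_display) (T : measurableType dT) (R : realType) (P : probability T R).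

Implicit Types f g : T -> R.
Definition I1 (f : T -> R) := f \in Lfun P 1.
Definition L2 (f : T -> R) := measurable_fun setT f /\ I1 (fun w => f w ^+ 2).
Definition Er (f : T -> R) : R := fine ('E_P[f])%E.

Lemma I1D f g : I1 f -> I1 g -> I1 (fun w => f w + g w).
Proof. by move=> hf hg; apply: rpredD. Qed.

Lemma I1Z f c : I1 f -> I1 (fun w => c * f w).
Proof.
move=> hf; have := @Lfun_scale _ _ _ P f c 1 (lexx _) hf.
by rewrite (_ : (fun w => c * f w) = c \o* f) // ; apply: funext => w /=; rewrite mulrC.
Qed.

Lemma I1N f : I1 f -> I1 (fun w => - f w).
Proof. move=> hf; have := @I1Z f (-1) hf. by under eq_fun do rewrite mulN1r. Qed.

Lemma I1B f g : I1 f -> I1 g -> I1 (fun w => f w - g w).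
Proof. by move=> hf hg; apply: I1D => //; apply: I1N. Qed.

Lemma I1cst c : I1 (fun _ => c).
Proof. exact: Lfun_cst. Qed.

Lemma I1_mes f : I1 f -> measurable_fun setT f.
Proof. by move=> /Lfun1_integrable /integrableP [/measurable_EFinP]. Qed.

Lemma I1_le f g : measurable_fun setT f -> (forall w, `|f w| <= g w) -> I1 g -> I1 f.
Proof.
move=> mf fg /Lfun1_integrable ig; apply/Lfun1_integrable.
apply: le_integrable ig => //; first exact/measurable_EFinP.
move=> w _ /=; rewrite lee_fin; apply: (le_trans (fg w)); exact: ler_norm.
Qed.

Lemma I1_norm f : I1 f -> I1 (fun w => `|f w|).
Proof.
move=> hf; apply: (I1_le (g := fun w => `|f w|)).
- by apply: measurableT_comp => //; apply: I1_mes.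
- by move=> w; rewrite normr_id.
- exact: Lfun_norm.
Qed.

Lemma I1_sum (I : Type) (s : seq I) (F : I -> T -> R) :
  (forall i, I1 (F i)) -> I1 (fun w => \sum_(i <- s) F i w).
Proof.
move=> hF; elim: s => [|i s IH].
  by under eq_fun do rewrite big_nil; apply: I1cst.
by under eq_fun do rewrite big_cons; apply: I1D.
Qed.

Lemma nsq (x : R) : `|x| ^+ 2 = x ^+ 2.
Proof. by rewrite -normrX ger0_norm ?sqr_ge0. Qed.

Lemma L2_mes f : L2 f -> measurable_fun setT f. Proof. by case. Qed.

Lemma L2_I1 f : L2 f -> I1 f.
Proof.
move=> [mf hf]; apply: (I1_le mf (g := fun w => 1 + f w ^+ 2)); last by apply: I1D => //; apply: I1cst.
move=> w; have := sqr_ge0 (`|f w| - 1); have := nsq (f w). nra.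
Qed.

Lemma L2_mul f g : L2 f -> L2 g -> I1 (fun w => f w * g w).
Proof.
move=> [mf hf] [mg hg]; apply: (I1_le (measurable_funM mf mg) (g := fun w => f w ^+ 2 + g w ^+ 2)); last exact: I1D.
move=> w; rewrite normrM; have := sqr_ge0 (`|f w| - `|g w|).
have := nsq (f w); have := nsq (g w). nra.
Qed.

Lemma L2D f g : L2 f -> L2 g -> L2 (fun w => f w + g w).
Proof.
move=> [mf hf] [mg hg]; split; first exact: measurable_funD.
apply: (I1_le _ (g := fun w => 2 * f w ^+ 2 + 2 * g w ^+ 2)).
- by apply: measurable_funX; apply: measurable_funD.
- move=> w; rewrite ger0_norm ?sqr_ge0 //; have := sqr_ge0 (f w - g w). nra.
- by apply: I1D; apply: I1Z.
Qed.

Lemma L2Z f c : L2 f -> L2 (fun w => c * f w).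
Proof.
move=> [mf hf]; split; first exact: measurable_funM.
have := @I1Z _ (c ^+ 2) hf. by under eq_fun do rewrite -exprMn.
Qed.

Lemma L2cst c : L2 (fun _ => c).
Proof. by split; [exact: measurable_cst | apply: I1cst]. Qed.

Lemma L2N f : L2 f -> L2 (fun w => - f w).
Proof. move=> hf; have := @L2Z f (-1) hf. by under eq_fun do rewrite mulN1r. Qed.

Lemma L2B f g : L2 f -> L2 g -> L2 (fun w => f w - g w).
Proof. by move=> hf hg; apply: L2D => //; apply: L2N. Qed.

Lemma L2_sum (I : Type) (s : seq I) (F : I -> T -> R) :
  (forall i, L2 (F i)) -> L2 (fun w => \sum_(i <- s) F i w).
Proof.
move=> hF; elim: s => [|i s IH].
  by under eq_fun do rewrite big_nil; apply: L2cst.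
by under eq_fun do rewrite big_cons; apply: L2D.
Qed.

Lemma ErE f : I1 f -> ('E_P[f] = (Er f)%:E)%E.
Proof. by move=> hf; rewrite /Er fineK //; exact: expectation_fin_num. Qed.

Lemma ErD f g : I1 f -> I1 g -> Er (fun w => f w + g w) = Er f + Er g.
Proof.
move=> hf hg; rewrite /Er (_ : (fun w => f w + g w) = f \+ g) // expectationD //.
by rewrite fineD //; exact: expectation_fin_num.
Qed.

Lemma ErZ f c : I1 f -> Er (fun w => c * f w) = c * Er f.
Proof.
move=> hf; rewrite /Er (_ : (fun w => c * f w) = c \o* f); last by apply: funext => w /=; rewrite mulrC.
by rewrite expectationZl // fineM //; exact: expectation_fin_num.
Qed.

Lemma ErN f : I1 f -> Er (fun w => - f w) = - Er f.
Proof.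
move=> hf; rewrite -mulN1r -(@ErZ f (-1) hf); congr Er; apply: funext => w; by rewrite mulN1r.
Qed.

Lemma ErB f g : I1 f -> I1 g -> Er (fun w => f w - g w) = Er f - Er g.
Proof. by move=> hf hg; rewrite ErD ?ErN //; apply: I1N. Qed.

Lemma Er_sum (I : Type) (s : seq I) (F : I -> T -> R) :
  (forall i, I1 (F i)) -> Er (fun w => \sum_(i <- s) F i w) = \sum_(i <- s) Er (F i).
Proof.
move=> hF; elim: s => [|i s IH].
  rewrite big_nil; under eq_fun do rewrite big_nil.
  by rewrite /Er (_ : (fun _ => 0) = cst 0) // expectation_cst.
rewrite big_cons -IH; under eq_fun do rewrite big_cons.
by rewrite ErD //; apply: I1_sum.
Qed.

Lemma Er_ge0 f : (forall w, 0 <= f w) -> 0 <= Er f.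
Proof. by move=> h; rewrite /Er fine_ge0 // expectation_ge0. Qed.

Lemma Er_le f g : I1 f -> I1 g -> (forall w, f w <= g w) -> Er f <= Er g.
Proof.
move=> hf hg h; rewrite -subr_ge0 -ErB //; apply: Er_ge0 => w; rewrite subr_ge0 //.
Qed.

End Infra.


Section CS.
Variable R : realType.
Lemma cs_real (x a b : R) : 0 <= a -> 0 <= b -> 0 <= x ->
  (forall l, 0 < l -> 2 * l * x <= l ^+ 2 * a + b) ->
  (forall l, 0 < l -> 2 * l * x <= a + l ^+ 2 * b) ->
  x <= Num.sqrt a * Num.sqrt b.
Proof.
move=> a0 b0 x0 h1 h2.
have [ea0|an0] := eqVneq a 0.
  rewrite ea0 sqrtr0 mul0r; rewrite le_eqVlt in x0; case/orP: x0 => [/eqP <-//|xp].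
  have := h1 ((b + 1) / x) (divr_gt0 (ltr_wpDl b0 ltr01) xp).
  rewrite ea0 mulr0 add0r -mulrA divfK ?gt_eqF //. lra.
have [eb0|bn0] := eqVneq b 0.
  rewrite eb0 sqrtr0 mulr0; rewrite le_eqVlt in x0; case/orP: x0 => [/eqP <-//|xp].
  have := h2 ((a + 1) / x) (divr_gt0 (ltr_wpDl a0 ltr01) xp).
  rewrite eb0 mulr0 addr0 -mulrA divfK ?gt_eqF //. lra.
have ap : 0 < a by rewrite lt_def an0.
have bp : 0 < b by rewrite lt_def bn0.
set s := Num.sqrt a; set t := Num.sqrt b.
have sp : 0 < s by rewrite sqrtr_gt0.
have tp : 0 < t by rewrite sqrtr_gt0.
have ea : a = s ^+ 2 by rewrite sqr_sqrtr // ltW.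
have eb : b = t ^+ 2 by rewrite sqr_sqrtr // ltW.
have := h1 (t / s) (divr_gt0 tp sp).
have ys : t / s * s = t by rewrite divfK ?gt_eqF.
set y := t / s in ys *.
have yp : 0 < y by rewrite /y divr_gt0.
rewrite ea eb => h.
have e2 : y ^+ 2 * s ^+ 2 = t ^+ 2 by rewrite -exprMn ys.
rewrite e2 in h.
have : y * x <= y * (s * t).
  rewrite -[in X in _ <= X]ys. nra.
by rewrite ler_pM2l.
Qed.
End CS.

Section CS2.
Variables (dT : measure_display) (T : measurableType dT) (R : realType) (P : probability T R).
Implicit Types f g : T -> R.

Lemma CS f g : L2 P f -> L2 P g ->
  Er P (fun w => `|f w * g w|) <= Num.sqrt (Er P (fun w => f w ^+ 2)) * Num.sqrt (Er P (fun w => g w ^+ 2)).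
Proof.
move=> hf hg.
have ifg : I1 P (fun w => `|f w * g w|) by apply: I1_norm; apply: L2_mul.
have if2 := hf.2. have ig2 := hg.2.
apply: cs_real; try apply: Er_ge0 => w; rewrite ?sqr_ge0 ?normr_ge0 //.
- move=> l lp; rewrite -(ErZ (2 * l) ifg) -(ErZ (l ^+ 2) if2) -ErD //; last exact: I1Z.
  apply: Er_le; [exact: I1Z| by apply: I1D => //; exact: I1Z| move=> w /=].
  rewrite normrM; have := sqr_ge0 (l * `|f w| - `|g w|); have := nsq (f w); have := nsq (g w). nra.
- move=> l lp; rewrite -(ErZ (2 * l) ifg) -(ErZ (l ^+ 2) ig2) -ErD //; last exact: I1Z.
  apply: Er_le; [exact: I1Z| by apply: I1D => //; exact: I1Z| move=> w /=].
  rewrite normrM; have := sqr_ge0 (`|f w| - l * `|g w|); have := nsq (f w); have := nsq (g w). nra.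
Qed.
End CS2.


Section Sums.
Variable R : realType.
Implicit Types g : int -> R.

Definition pS g (N : nat) : R := \sum_(1 <= u < N) (`|g u%:Z| + `|g (- u%:Z)|).

Lemma nd_sum (F : nat -> R) : (forall u, 0 <= F u) ->
  nondecreasing_seq (fun N => \sum_(1 <= u < N) F u).
Proof.
move=> F0; apply/nondecreasing_seqP => N; case: N => [|N]; first by rewrite !big_geq.
by rewrite [X in _ <= X]big_nat_recr //= lerDl.
Qed.

Lemma pS_nd g : nondecreasing_seq (pS g).
Proof. by apply: nd_sum => u; rewrite addr_ge0. Qed.

Definition W (m : nat) : seq int :=
  0 :: map Posz (iota 1 m) ++ map (fun u : nat => - Posz u) (iota 1 m).

Lemma W_sum g m : \sum_(u <- W m) `|g u| = `|g 0| + pS g m.+1.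
Proof.
rewrite /W big_cons big_cat !big_map /pS /index_iota subSS subn0 big_split //.
Qed.

Lemma W_uniq m : uniq (W m).
Proof.
rewrite /W /= cat_uniq !map_inj_uniq ?iota_uniq //; try by move=> x y /eqP; rewrite ?eqr_opp => /eqP [].
rewrite mem_cat negb_or !andbT; apply/and3P; split; [apply/andP; split| by [] |].
- by apply/negP => /mapP [x]; rewrite mem_iota => /andP [x1 _] [] x0; rewrite -x0 in x1.
- apply/negP => /mapP [x]; rewrite mem_iota => /andP [x1 _] /eqP; rewrite eq_sym oppr_eq0 => /eqP [] x0.
  by rewrite x0 in x1.
- apply/negP => /hasP [y /mapP [x _ ->] /mapP [z]]; rewrite mem_iota => /andP [z1 _] e.
  lia.
Qed.

Lemma W_mem m (u : int) : (`|u|%N <= m)%N -> u \in W m.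
Proof.
rewrite /W inE mem_cat; case: u => [[|p]|p] /= h.
- by [].
- by apply/orP; left; apply/mapP; exists p.+1 => //; rewrite mem_iota /=; lia.
- apply/orP; right; apply/mapP; exists p.+1; first by rewrite mem_iota; lia.
  by rewrite NegzE.
Qed.

Lemma uniq_sub_sum (S W' : seq int) (F : int -> R) : uniq S -> uniq W' -> {subset S <= W'} ->
  (forall u, 0 <= F u) -> \sum_(u <- S) F u <= \sum_(u <- W') F u.
Proof.
move=> uS uW sSW F0; rewrite [X in _ <= X](bigID (mem S)) /=.
have -> : \sum_(i <- W' | i \in S) F i = \sum_(i <- S) F i.
  rewrite -big_filter; apply: perm_big.
  apply: uniq_perm; rewrite ?filter_uniq // => x; rewrite mem_filter.
  by case xS: (x \in S) => //=; rewrite sSW.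
by rewrite lerDl sumr_ge0.
Qed.

Lemma sum_le_Zsum g (S : seq int) : cvgn (pS g) -> uniq S ->
  \sum_(u <- S) `|g u| <= Zsum (fun u => `|g u|).
Proof.
move=> cg uS; set m := (\max_(u <- S) `|u|%N)%N.
apply: (le_trans (@uniq_sub_sum S (W m) (fun u => `|g u|) uS (W_uniq m) _ _)).
- move=> u uS'; apply: W_mem; rewrite /m; exact: (@leq_bigmax_seq _ S xpredT (fun u : int => `|u|%N) u uS').
- by move=> u.
- by rewrite W_sum /Zsum lerD2l; apply: nondecreasing_cvgn_le => //; apply: pS_nd.
Qed.

Lemma Zsum_ge0 g : cvgn (pS g) -> 0 <= Zsum (fun u => `|g u|).
Proof.
move=> cg; apply: (le_trans _ (@sum_le_Zsum g [::] cg _)) => //.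
by rewrite big_nil.
Qed.

Lemma cvg_pS g :
  cvgn (fun N : nat => \sum_(1 <= u < N) (`| (`|u%:Z|%:~R * g u%:Z) | + `| (`|(- u%:Z)|%:~R * g (- u%:Z)) |)) ->
  cvgn (pS g).
Proof.
move=> hq; apply: nondecreasing_is_cvgn; first exact: pS_nd.
set q := (fun N : nat => _) in hq.
have qnd : nondecreasing_seq q by apply: nd_sum => u; rewrite addr_ge0.
exists (limn q) => _ [N _ <-]; apply: (le_trans _ (nondecreasing_cvgn_le qnd hq N)).
rewrite /pS /q; apply: ler_sum_nat => u /andP [u1 _].
rewrite !normrM.
have h (x : int) : x != 0 -> 1 <= `|(`|x|)%:~R : R|.
  move=> x0; rewrite ger0_norm ?ler0z ?normr_ge0 // ler1z; lia.
by apply: lerD; rewrite ler_peMl // h //; lia.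
Qed.

End Sums.


Section Quad.
Variables (dT : measure_display) (T : measurableType dT) (R : realType) (P : probability T R).
Variables (d : nat) (X : int -> 'I_d -> T -> R).
Hypothesis HX : weakly_stationary_centred P X.

Definition Lin (s : seq nat) (c : nat -> R) (j : 'I_d) (w : T) : R :=
  \sum_(t <- s) c t * X t%:Z j w.

Lemma X_L2 t j : L2 P (X t j).
Proof.
case: HX => mX iX _ _; split; first exact: mX.
by apply/Lfun1_integrable; exact: iX.
Qed.

Lemma Lin_L2 s c j : L2 P (Lin s c j).
Proof. by apply: L2_sum => t; apply: L2Z; apply: X_L2. Qed.

Lemma EXX j (s t : int) : Er P (fun w => X s j w * X t j w) = acov P X j j (s - t).
Proof.
case: HX => _ _ _ st; rewrite /acov /Er -(st j j t (s - t)).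
by rewrite [t + _]addrC subrK.
Qed.

Lemma EXXc j a (s t : int) : Er P (fun w => a * (X s j w * X t j w)) = a * acov P X j j (s - t).
Proof. by rewrite ErZ ?EXX //; apply: L2_mul; apply: X_L2. Qed.

Lemma pt_bound (x y g : R) : x * y * g <= x ^+ 2 / 2 * `|g| + y ^+ 2 / 2 * `|g|.
Proof.
have := ler_norm (x * y * g); rewrite !normrM.
have := sqr_ge0 (`|x| - `|y|); have := nsq x; have := nsq y; have := normr_ge0 g.
nra.
Qed.

Lemma row_bound1 j (s : seq nat) (t : nat) : uniq s -> cvgn (pS (acov P X j j)) ->
  \sum_(u <- s) `|acov P X j j (t%:Z - u%:Z)| <= Zsum (fun u => `|acov P X j j u|).
Proof.
move=> us cg; rewrite -(big_map (fun u : nat => t%:Z - u%:Z) xpredT (fun v => `|acov P X j j v|)).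
apply: sum_le_Zsum => //; rewrite map_inj_uniq //; by move=> x y /addrI /oppr_inj [].
Qed.

Lemma row_bound2 j (s : seq nat) (t : nat) : uniq s -> cvgn (pS (acov P X j j)) ->
  \sum_(u <- s) `|acov P X j j (u%:Z - t%:Z)| <= Zsum (fun u => `|acov P X j j u|).
Proof.
move=> us cg; rewrite -(big_map (fun u : nat => u%:Z - t%:Z) xpredT (fun v => `|acov P X j j v|)).
apply: sum_le_Zsum => //; rewrite map_inj_uniq //; by move=> x y /addIr [].
Qed.

Lemma quad j (s : seq nat) (c : nat -> R) : uniq s -> cvgn (pS (acov P X j j)) ->
  Er P (fun w => Lin s c j w ^+ 2) <= (\sum_(t <- s) c t ^+ 2) * Zsum (fun u => `|acov P X j j u|).
Proof.
move=> us cg.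
set C := Zsum _.
have e : (fun w => Lin s c j w ^+ 2) =
   (fun w => \sum_(t <- s) \sum_(u <- s) (c t * c u) * (X t%:Z j w * X u%:Z j w)).
  apply: funext => w; rewrite expr2 /Lin mulr_suml; apply: eq_bigr => t _.
  rewrite mulr_sumr; apply: eq_bigr => u _; ring.
rewrite e Er_sum; last first.
  move=> t; apply: I1_sum => u; apply: I1Z; apply: L2_mul; apply: X_L2.
under eq_bigr => t _.
  rewrite Er_sum; last by move=> u; apply: I1Z; apply: L2_mul; apply: X_L2.
  under eq_bigr => u _ do rewrite EXXc.
  over.
apply: (@le_trans _ _ (\sum_(t <- s) \sum_(u <- s)
   (c t ^+ 2 / 2 * `|acov P X j j (t%:Z - u%:Z)| + c u ^+ 2 / 2 * `|acov P X j j (t%:Z - u%:Z)|))).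
  by apply: ler_sum => t _; apply: ler_sum => u _; apply: pt_bound.
under eq_bigr => t _ do rewrite big_split /=.
rewrite big_split /= [X in _ + X]exchange_big /=.
apply: (@le_trans _ _ (\sum_(t <- s) c t ^+ 2 / 2 * C + \sum_(u <- s) c u ^+ 2 / 2 * C)).
  apply: lerD; apply: ler_sum => t _; rewrite -mulr_sumr; (apply: ler_wpM2l;
    first by apply: mulr_ge0; [exact: sqr_ge0| rewrite invr_ge0 ler0n]).
  - exact: row_bound1.
  - exact: row_bound2.
rewrite -big_split /= mulr_suml; apply: ler_sum => t _; lra.
Qed.

End Quad.


Section Rep.
Variables (dT : measure_display) (T : measurableType dT) (R : realType) (P : probability T R).
Variables (d : nat) (X : int -> 'I_d -> T -> R).

Lemma sum_const_seq (I : Type) (s : seq I) (c : R) : \sum_(t <- s) c = (size s)%:R * c.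
Proof. elim: s => [|x s IH]; first by rewrite big_nil mul0r. by rewrite big_cons IH /= -add1n natrD mulrDl mul1r. Qed.

Lemma split_iota (f : nat -> R) p n : (p <= n)%N ->
  \sum_(t <- iota 1 n) f t = \sum_(t <- iota 1 p) f t + \sum_(t <- iota p.+1 (n - p)) f t.
Proof. by move=> h; rewrite -{1}(subnKC h) iotaD big_cat add1n. Qed.

Lemma index_iota1 m : index_iota 1 m.+1 = iota 1 m.
Proof. by rewrite /index_iota subSS subn0. Qed.

Lemma sum_expand (s : seq nat) (x y : nat -> R) (c e : R) :
  \sum_(t <- s) (x t - c) * (y t - e) =
  \sum_(t <- s) x t * y t - e * \sum_(t <- s) x t - c * \sum_(t <- s) y t + (size s)%:R * c * e.
Proof.
elim: s => [|t s IH]; first by rewrite !big_nil /= mul0r mul0r !mulr0 !subr0 addr0.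
rewrite !big_cons IH /= -add1n natrD; ring.
Qed.

Lemma Lin_B s c1 c2 j w : Lin X s (fun t => c1 t - c2 t) j w = Lin X s c1 j w - Lin X s c2 j w.
Proof. by rewrite /Lin -sumrB; apply: eq_bigr => t _; rewrite mulrBl. Qed.

Variables (n k : nat).
Hypothesis hk : (k < n)%N.
Let m := (n - k)%N.

Definition cA (t : nat) : R := n%:R^-1.
Definition cal (t : nat) : R := if (t <= k)%N then 0 else m%:R^-1.
Definition cbe (t : nat) : R := if (t <= m)%N then m%:R^-1 else 0.

Lemma smean_Lin j w : smean X n j w = Lin X (iota 1 n) cA j w.
Proof. by rewrite /smean /Lin index_iota1 mulr_sumr. Qed.

Lemma al_Lin j w : m%:R^-1 * \sum_(1 <= t < m.+1) X (t + k)%:Z j w = Lin X (iota 1 n) cal j w.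
Proof.
rewrite /Lin [RHS](split_iota _ (ltnW hk)) [X in _ = X + _]big1_seq ?add0r; last first.
  by move=> t /andP [_]; rewrite mem_iota /cal => /andP [_ h]; rewrite ifT ?mul0r //; lia.
have -> : iota k.+1 (n - k) = map (addn k) (iota 1 (n - k)) by rewrite -iotaDl addn1.
rewrite index_iota1 mulr_sumr big_map; apply: eq_big_seq => t.
rewrite mem_iota /cal => /andP [h1 _]; rewrite ifF; last by lia.
by rewrite addnC.
Qed.

Lemma be_Lin j w : m%:R^-1 * \sum_(1 <= t < m.+1) X t%:Z j w = Lin X (iota 1 n) cbe j w.
Proof.
have hm : (m <= n)%N by rewrite /m leq_subr.
rewrite /Lin [RHS](split_iota _ hm) [X in _ = _ + X]big1_seq ?addr0; last first.
  by move=> t /andP [_]; rewrite mem_iota /cbe => /andP [h _]; rewrite ifF ?mul0r //; lia.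
rewrite index_iota1 mulr_sumr; apply: eq_big_seq => t.
by rewrite mem_iota /cbe => /andP [h1 h2]; rewrite ifT //; lia.
Qed.

Lemma nR : n%:R = k%:R + m%:R :> R.
Proof. by rewrite -natrD /m subnKC // ltnW. Qed.

Lemma n0 : n%:R != 0 :> R.
Proof. by rewrite pnatr_eq0 -lt0n; lia. Qed.

Lemma m0 : m%:R != 0 :> R.
Proof. by rewrite pnatr_eq0 -lt0n /m; lia. Qed.

Lemma sq_cal : \sum_(t <- iota 1 n) cal t ^+ 2 = m%:R^-1.
Proof.
rewrite (split_iota _ (ltnW hk)) big1_seq ?add0r; last first.
  by move=> t /andP [_]; rewrite mem_iota /cal => /andP [_ h]; rewrite ifT ?expr0n //; lia.
rewrite (eq_big_seq (fun _ => m%:R^-2)); last first.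
  by move=> t; rewrite mem_iota /cal => /andP [h1 _]; rewrite ifF ?exprVn //; lia.
rewrite sum_const_seq size_iota -/m; have := m0; move: (m%:R) => x x0; by field.
Qed.

Lemma sq_cbe : \sum_(t <- iota 1 n) cbe t ^+ 2 = m%:R^-1.
Proof.
have hm : (m <= n)%N by rewrite /m leq_subr.
rewrite (split_iota _ hm) [X in _ + X]big1_seq ?addr0; last first.
  by move=> t /andP [_]; rewrite mem_iota /cbe => /andP [h _]; rewrite ifF ?expr0n //; lia.
rewrite (eq_big_seq (fun _ => m%:R^-2)); last first.
  by move=> t; rewrite mem_iota /cbe => /andP [h1 h2]; rewrite ifT ?exprVn //; lia.
rewrite sum_const_seq size_iota; have := m0; move: (m%:R) => x x0; by field.
Qed.

Lemma sq_cF : \sum_(t <- iota 1 n) (cA t - cal t) ^+ 2 = k%:R / (n%:R * m%:R).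
Proof.
rewrite (split_iota _ (ltnW hk)).
rewrite (eq_big_seq (fun _ => n%:R^-2)); last first.
  by move=> t; rewrite mem_iota /cal /cA => /andP [_ h]; rewrite ifT ?subr0 ?exprVn //; lia.
rewrite [X in _ + X](eq_big_seq (fun _ => (n%:R^-1 - m%:R^-1) ^+ 2)); last first.
  by move=> t; rewrite mem_iota /cal /cA => /andP [h1 _]; rewrite ifF //; lia.
rewrite !sum_const_seq !size_iota -/m.
have := n0; have := m0; rewrite nR; move: (k%:R) (m%:R) => x y y0 xy0; field.
by rewrite y0 xy0.
Qed.

Lemma sq_cG : \sum_(t <- iota 1 n) (cA t - cbe t) ^+ 2 = k%:R / (n%:R * m%:R).
Proof.
have hm : (m <= n)%N by rewrite /m leq_subr.
rewrite (split_iota _ hm).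
rewrite (eq_big_seq (fun _ => (n%:R^-1 - m%:R^-1) ^+ 2)); last first.
  by move=> t; rewrite mem_iota /cbe /cA => /andP [h1 h2]; rewrite ifT //; lia.
rewrite [X in _ + X](eq_big_seq (fun _ => n%:R^-2)); last first.
  by move=> t; rewrite mem_iota /cbe /cA => /andP [h _]; rewrite ifF ?subr0 ?exprVn //; lia.
rewrite !sum_const_seq !size_iota (_ : (n - m)%N = k); last by rewrite /m; lia.
have := n0; have := m0; rewrite nR; move: (k%:R) (m%:R) => x y y0 xy0; field.
by rewrite y0 xy0.
Qed.

End Rep.


Section Main.
Variables (dT : measure_display) (T : measurableType dT) (R : realType) (P : probability T R).
Variables (d : nat) (X : int -> 'I_d -> T -> R) (a b : 'I_d) (n k : nat).
Hypothesis hk : (k < n)%N.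

Definition FF w := Lin X (iota 1 n) (fun t => cA R n t - cal R n k t) a w.
Definition GG w := Lin X (iota 1 n) (fun t => cA R n t - cbe R n k t) b w.
Definition AL w := Lin X (iota 1 n) (cal R n k) a w.
Definition BE w := Lin X (iota 1 n) (cbe R n k) b w.

Lemma diff_id w : acov_tilde X n a b k w - acov_hat X n a b k w =
  ((n - k)%:R / n%:R) * (FF w * GG w - AL w * BE w).
Proof.
rewrite /acov_tilde /acov_hat sum_expand size_iota /FF /GG !Lin_B -!smean_Lin.
rewrite /AL /BE -(al_Lin X hk) -(be_Lin X hk).
rewrite subn1 /=.
have := n0 R hk; have := m0 R hk.
move: (smean X n a w) (smean X n b w) ((n - k)%:R) (n%:R) => Ab Bb mm nn m0' n0'.
by field; rewrite m0' n0'.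
Qed.

End Main.


Lemma final_real (R : realType) (n k m CA CB DA DB : R) :
  0 < n -> 0 < m -> n = k + m -> 0 <= k -> 0 <= CA -> 0 <= CB -> 0 <= DA -> 0 <= DB ->
  Num.sqrt n * (m / n) * (Num.sqrt (k / (n * m) * CA) * Num.sqrt (k / (n * m) * CB)
     + Num.sqrt (m^-1 * CA) * Num.sqrt (m^-1 * CB))
  <= (Num.sqrt n)^-1 * Num.sqrt CA * Num.sqrt CB
     + k / (n * Num.sqrt n) * Num.sqrt (CA + n^-1 * DA) * Num.sqrt (CB + n^-1 * DB).
Proof.
move=> n0 m0 nkm k0 A0 B0 DA0 DB0.
have q0 : 0 <= k / (n * m) by rewrite divr_ge0 // mulr_ge0 // ltW.
have r0 : 0 <= m^-1 by rewrite invr_ge0 ltW.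
have sq (q : R) : 0 <= q -> Num.sqrt q * Num.sqrt q = q by move=> q0'; rewrite -expr2 sqr_sqrtr.
rewrite !(sqrtrM _ q0) !(sqrtrM _ r0).
rewrite [X in _ * (X + _)]mulrACA [X in _ * (_ + X)]mulrACA !sq //.
have snp : 0 < Num.sqrt n by rewrite sqrtr_gt0.
have sn2 := sq n (ltW n0).
set sA := Num.sqrt CA; set sB := Num.sqrt CB.
set sA' := Num.sqrt (CA + _); set sB' := Num.sqrt (CB + _).
set sn := Num.sqrt n in snp sn2 *.
have -> : sn * (m / n) * (k / (n * m) * (sA * sB) + m^-1 * (sA * sB)) =
          sn^-1 * sA * sB + k / (n * sn) * sA * sB.
  rewrite -sn2; field; rewrite ?gt_eqF //.
apply: lerD => //.
have c0 : 0 <= k / (n * sn) by rewrite divr_ge0 // mulr_ge0 // ltW.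
have sA0 : 0 <= sA by rewrite sqrtr_ge0.
have sB0 : 0 <= sB by rewrite sqrtr_ge0.
have hA : sA <= sA' by apply: ler_wsqrtr; rewrite lerDl mulr_ge0 // invr_ge0 ltW.
have hB : sB <= sB' by apply: ler_wsqrtr; rewrite lerDl mulr_ge0 // invr_ge0 ltW.
apply: ler_pM => //; first exact: mulr_ge0.
exact: ler_wpM2l.
Qed.


Lemma DA_ge0 (R : realType) (g : int -> R) :
  cvgn (fun N : nat => \sum_(1 <= u < N) (`| (`|u%:Z|%:~R * g u%:Z) | + `| (`|(- u%:Z)|%:~R * g (- u%:Z)) |)) ->
  0 <= Zsum (fun u => `|u|%:~R * `|g u|).
Proof.
move=> hq; rewrite /Zsum normr0 mul0r add0r.
set q := (fun N : nat => _) in hq.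
have -> : (fun N : nat => \sum_(1 <= u < N) (`|u%:Z|%:~R * `|g u%:Z| + `|(- u%:Z)|%:~R * `|g (- u%:Z)|)) = q.
  apply: funext => N; apply: eq_bigr => u _.
  by rewrite !normrM !(@ger0_norm _ (`|_|%:~R)) // ler0z normr_ge0.
have qnd : nondecreasing_seq q by apply: nd_sum => u; rewrite addr_ge0.
have := nondecreasing_cvgn_le qnd hq 0.
by rewrite /q big_geq.
Qed.

Lemma lip_cont (R : realType) (h : R -> R) : (forall x y, `|h x - h y| <= `|x - y|) -> continuous h.
Proof.
move=> hl x; apply/cvgrPdist_lt => e e0; near=> y.
apply: (le_lt_trans (hl x y)); near: y.
by apply: cvgr_dist_lt.
Unshelve. all: by end_near. Qed.

Theorem lemmaC1 (dT : measure_display) (T : measurableType dT) (R : realType)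
  (P : probability T R) (d : nat) (X : int -> 'I_d -> T -> R) (a b : 'I_d)
  (n k : nat) :
  weakly_stationary_centred P X ->
  Zabs_summable (fun u => `|u|%:~R * acov P X a a u) ->
  Zabs_summable (fun u => `|u|%:~R * acov P X b b u) ->
  (k < n)%N ->
  (dW P (fun w => Num.sqrt n%:R * (acov_tilde X n a b k w - acov P X a b k%:Z))%R
        (fun w => Num.sqrt n%:R * (acov_hat X n a b k w - acov P X a b k%:Z))%R
   <= (((Num.sqrt n%:R)^-1
         * Num.sqrt (Zsum (fun u => `|acov P X a a u|))
         * Num.sqrt (Zsum (fun u => `|acov P X b b u|))
       + k%:R / (n%:R * Num.sqrt n%:R)
         * Num.sqrt (Zsum (fun u => `|acov P X a a u|)
                     + n%:R^-1 * Zsum (fun u => `|u|%:~R * `|acov P X a a u|))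
         * Num.sqrt (Zsum (fun u => `|acov P X b b u|)
                     + n%:R^-1 * Zsum (fun u => `|u|%:~R * `|acov P X b b u|)))%R)%:E)%E.
Proof.
move=> HX hA hB hk.
have cgA : cvgn (pS (acov P X a a)) by apply: cvg_pS; exact: hA.
have cgB : cvgn (pS (acov P X b b)) by apply: cvg_pS; exact: hB.
have CA0 : 0 <= Zsum (fun u => `|acov P X a a u|) by apply: Zsum_ge0.
have CB0 : 0 <= Zsum (fun u => `|acov P X b b u|) by apply: Zsum_ge0.
have DA0 : 0 <= Zsum (fun u => `|u|%:~R * `|acov P X a a u|) by apply: DA_ge0; exact: hA.
have DB0 : 0 <= Zsum (fun u => `|u|%:~R * `|acov P X b b u|) by apply: DA_ge0; exact: hB.
set U := (fun w => Num.sqrt n%:R * (acov_tilde X n a b k w - acov P X a b k%:Z)).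
set V := (fun w => Num.sqrt n%:R * (acov_hat X n a b k w - acov P X a b k%:Z)).
have L2sm j : L2 P (smean X n j).
  have : L2 P (fun w => n%:R^-1 * \sum_(1 <= t < n.+1) X t%:Z j w).
    by apply: L2Z; apply: L2_sum => t; apply: X_L2.
  by [].
have I1U : I1 P U.
  apply: I1Z; apply: I1B; last exact: I1cst.
  have : I1 P (fun w => n%:R^-1 * \sum_(1 <= t < (n - k).+1)
     ((X (t + k)%:Z a w - smean X n a w) * (X t%:Z b w - smean X n b w))).
    apply: I1Z; apply: I1_sum => t; apply: L2_mul; apply: L2B => //; exact: X_L2.
  by [].
have I1V : I1 P V.
  apply: I1Z; apply: I1B; last exact: I1cst.
  have : I1 P (fun w => n%:R^-1 * \sum_(1 <= t < (n - k).+1) (X (t + k)%:Z a w * X t%:Z b w)).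
    apply: I1Z; apply: I1_sum => t; apply: L2_mul; exact: X_L2.
  by [].
have key : Er P (fun w => `|U w - V w|) <=
   (Num.sqrt n%:R)^-1
         * Num.sqrt (Zsum (fun u => `|acov P X a a u|))
         * Num.sqrt (Zsum (fun u => `|acov P X b b u|))
       + k%:R / (n%:R * Num.sqrt n%:R)
         * Num.sqrt (Zsum (fun u => `|acov P X a a u|)
                     + n%:R^-1 * Zsum (fun u => `|u|%:~R * `|acov P X a a u|))
         * Num.sqrt (Zsum (fun u => `|acov P X b b u|)
                     + n%:R^-1 * Zsum (fun u => `|u|%:~R * `|acov P X b b u|)).
  pose K := Num.sqrt n%:R * ((n - k)%:R / n%:R : R).
  have K0 : 0 <= K by rewrite mulr_ge0 ?sqrtr_ge0 // divr_ge0 // ler0n.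
  have -> : (fun w => `|U w - V w|) =
      (fun w => K * `|FF X a n k w * GG X b n k w - AL X a n k w * BE X b n k w|).
    apply: funext => w; rewrite /U /V -mulrBr opprB addrA subrK diff_id //.
    by rewrite mulrA normrM ger0_norm.
  have LF := Lin_L2 HX (iota 1 n) (fun t => cA R n t - cal R n k t) a.
  have LG := Lin_L2 HX (iota 1 n) (fun t => cA R n t - cbe R n k t) b.
  have LA := Lin_L2 HX (iota 1 n) (cal R n k) a.
  have LB := Lin_L2 HX (iota 1 n) (cbe R n k) b.
  have I1FG : I1 P (fun w => `|FF X a n k w * GG X b n k w|) by apply: I1_norm; exact: L2_mul.
  have I1AB : I1 P (fun w => `|AL X a n k w * BE X b n k w|) by apply: I1_norm; exact: L2_mul.
  apply: (@le_trans _ _ (Er P (fun w => K * (`|FF X a n k w * GG X b n k w| + `|AL X a n k w * BE X b n k w|)))).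
    apply: Er_le.
    - apply: I1Z; apply: I1_norm; apply: I1B; exact: L2_mul.
    - by apply: I1Z; apply: I1D.
    - by move=> w; apply: ler_wpM2l => //; apply: ler_normB.
  rewrite ErZ ?ErD //; last by apply: I1D.
  have hu := iota_uniq 1 n.
  have QF := quad HX (fun t => cA R n t - cal R n k t) hu cgA.
  have QG := quad HX (fun t => cA R n t - cbe R n k t) hu cgB.
  have QA := quad HX (cal R n k) hu cgA.
  have QB := quad HX (cbe R n k) hu cgB.
  rewrite sq_cF // in QF; rewrite sq_cG // in QG; rewrite sq_cal // in QA; rewrite sq_cbe // in QB.
  have h1 : 0 < n%:R :> R by rewrite ltr0n (leq_ltn_trans _ hk).
  have h2 : 0 < (n - k)%:R :> R by rewrite ltr0n subn_gt0.
  have FR := @final_real R n%:R k%:R (n - k)%:R _ _ _ _ h1 h2 (nR R hk) (ler0n _ _) CA0 CB0 DA0 DB0.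
  apply: (le_trans _ FR).
  apply: ler_wpM2l => //; apply: lerD.
  - apply: le_trans (CS LF LG) _; apply: ler_pM; rewrite ?sqrtr_ge0 //; exact: ler_wsqrtr.
  - apply: le_trans (CS LA LB) _; apply: ler_pM; rewrite ?sqrtr_ge0 //; exact: ler_wsqrtr.
rewrite /dW; apply: ge_ereal_sup => _ [h hl <-].
have mh : measurable_fun setT h := continuous_measurable_fun (@lip_cont R h hl).
have Ih (f : T -> R) : I1 P f -> I1 P (h \o f).
  move=> hf; apply: (I1_le (g := fun w => `|h 0| + `|f w|)).
  - exact: measurableT_comp mh (I1_mes hf).
  - move=> w /=; have := (hl : forall x y, _) (f w) 0; rewrite subr0 => h1.
    have := ler_normD (h (f w) - h 0) (h 0); rewrite subrK => H.
    by apply: (le_trans H); rewrite addrC lerD2l.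
  - by apply: I1D; [apply: I1cst | exact: I1_norm].
rewrite !ErE; [|exact: Ih|exact: Ih].
rewrite -EFinB /= lee_fin; apply: le_trans key.
rewrite -ErB; [|exact: Ih|exact: Ih].
have IUV : I1 P (fun w => `|U w - V w|) by apply: I1_norm; apply: I1B.
have IhUV : I1 P (fun w => (h \o U) w - (h \o V) w) by apply: I1B; exact: Ih.
rewrite ler_norml; apply/andP; split.
- rewrite -ErN //; apply: Er_le => //; first exact: I1N.
  move=> w /=; have := (hl : forall x y, _) (U w) (V w); rewrite ler_norml => /andP [] //.
- apply: Er_le => // w /=; have := (hl : forall x y, _) (U w) (V w); rewrite ler_norml => /andP [] //.
Qed.
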